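(* For every integer $r\ge1$, for both choices of sign, and all real $x$, $$\operatorname{sech}^{2r+1}x=\frac{(\pm1)^{r+1}}{r\,(2r-1)!!}\Big(\frac{d}{d\sinh x}\Big)^{r+1}e^{\pm rx},$$ where $\frac{d}{d\sinh x}$ denotes differentiation with respect to the variable $u=\sinh x$ (i.e. $e^{\pm rx}$ is regarded as the function $(\sqrt{1+u^2}\pm u)^{r}$ of $u$, differentiated $r+1$ times in $u$, and then evaluated at $u=\sinh x$), and $(2r-1)!!=1\cdot3\cdots(2r-1)$. *)

(* Defs.v *)
From Stdlib Require Import Reals.
Open Scope R_scope.

Fixpoint dfact (n : nat) : nat :=
  match n with
  | O => 1%nat
  | S O => 1%nat
  | S (S m as k) => (S k * dfact m)%nat
  end.

Definition sech (x : R) : R := / cosh x.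

Inductive nth_deriv : nat -> (R -> R) -> (R -> R) -> Prop :=
  | nth_deriv_O : forall f, nth_deriv 0 f f
  | nth_deriv_S : forall n f f1 g,
      (forall u, derivable_pt_lim f u (f1 u)) ->
      nth_deriv n f1 g -> nth_deriv (S n) f g.

(* Main.v *)
Require Import Defs.
From Stdlib Require Import Reals Lra Lia FunctionalExtensionality.
Open Scope R_scope.

Lemma dpl_div f g f' g' u : derivable_pt_lim f u f' -> derivable_pt_lim g u g' -> g u <> 0 ->
  derivable_pt_lim (fun y => f y / g y) u ((f'*g u - g'*f u)/(g u)^2).
Proof. intros. replace ((g u)^2) with (Rsqr (g u)) by (unfold Rsqr; ring).
  apply (derivable_pt_lim_div f g); auto. Qed.
Lemma dpl_mult f g f' g' u : derivable_pt_lim f u f' -> derivable_pt_lim g u g' ->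
  derivable_pt_lim (fun y => f y * g y) u (f' * g u + f u * g').
Proof. intros. apply (derivable_pt_lim_mult f g); auto. Qed.
Lemma dpl_plus f g f' g' u : derivable_pt_lim f u f' -> derivable_pt_lim g u g' ->
  derivable_pt_lim (fun y => f y + g y) u (f' + g').
Proof. intros. apply (derivable_pt_lim_plus f g); auto. Qed.
Lemma dpl_const c u : derivable_pt_lim (fun _ => c) u 0.
Proof. apply derivable_pt_lim_const. Qed.
Lemma dpl_id u : derivable_pt_lim (fun y => y) u 1.
Proof. apply derivable_pt_lim_id. Qed.
Lemma dpl_ext f g u l : (forall y, f y = g y) -> derivable_pt_lim g u l -> derivable_pt_lim f u l.
Proof. intros H. replace f with g; auto. apply functional_extensionality; auto. Qed.
Lemma dpl_eq f u l l' : l = l' -> derivable_pt_lim f u l -> derivable_pt_lim f u l'.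
Proof. intros ->; auto. Qed.
Lemma dpl_pow f f' n u : derivable_pt_lim f u f' ->
  derivable_pt_lim (fun y => f y ^ n) u (INR n * f u ^ pred n * f').
Proof. intros H. 
  apply (derivable_pt_lim_comp f (fun y => y ^ n) u f' _ H (derivable_pt_lim_pow _ n)). Qed.
Lemma dpl_sqrt f f' u : derivable_pt_lim f u f' -> 0 < f u ->
  derivable_pt_lim (fun y => sqrt (f y)) u (f' / (2 * sqrt (f u))).
Proof. intros H Hp. 
  apply (dpl_eq _ _ (/ (2 * sqrt (f u)) * f')). field. generalize (sqrt_lt_R0 _ Hp); lra.
  apply (derivable_pt_lim_comp f sqrt u f' _ H (derivable_pt_lim_sqrt _ Hp)). Qed.

Definition w (u : R) := sqrt (1 + u ^ 2).
Lemma w_pos u : 0 < w u.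
Proof. unfold w. apply sqrt_lt_R0. nra. Qed.
Lemma w_sq u : w u ^ 2 = 1 + u ^ 2.
Proof. unfold w. rewrite <- Rsqr_pow2. rewrite Rsqr_sqrt; nra. Qed.
Lemma w_deriv u : derivable_pt_lim w u (u / w u).
Proof. unfold w. eapply dpl_eq; [| apply dpl_sqrt].
  2: { apply dpl_plus. apply dpl_const. apply (dpl_pow (fun y => y)). apply dpl_id. }
  2: nra. simpl. assert (0 < sqrt (1 + u * (u * 1))) by (apply sqrt_lt_R0; nra). field. lra. Qed.

Section S.
Variable r : nat.
Variable s : R.
Hypothesis Hs0 : s = 1 \/ s = -1.
Lemma Hs : s * s = 1. Proof. destruct Hs0; subst; ring. Qed.
Hypothesis Hr : (1 <= r)%nat.

Definition F u := (w u + s * u) ^ r.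

Fixpoint D (k : nat) : R -> R :=
  match k with
  | O => F
  | S O => fun u => INR r * s * F u / w u
  | S (S k' as k1) => fun u => (- (2 * INR k' + 1) * u * D k1 u + (INR r ^ 2 - INR k' ^ 2) * D k' u) / (1 + u ^ 2)
  end.

Lemma D0_deriv u : derivable_pt_lim (D 0) u (D 1 u).
Proof.
  simpl. unfold F. eapply dpl_eq; [| apply dpl_pow, dpl_plus; [apply w_deriv | apply dpl_mult; [apply dpl_const | apply dpl_id]]].
  destruct r as [|r']; [lia|]. simpl pred. assert (Hw := w_pos u).
  replace (u / w u + (0 * u + s * 1)) with (s * (w u + s * u) / w u).
  rewrite <- tech_pow_Rmult. field. lra.
  rewrite Rmult_plus_distr_l, <- Rmult_assoc, Hs. field. lra.
Qed.

Lemma D1_deriv u : derivable_pt_lim (D 1) u (D 2 u).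
Proof.
  simpl D. eapply dpl_eq; [| apply dpl_div; [apply dpl_mult; [apply dpl_const | apply D0_deriv] | apply w_deriv | generalize (w_pos u); lra]].
  cbv beta. assert (Hw := w_pos u). replace (1 + u * (u*1)) with (w u ^ 2) by (rewrite w_sq; ring).
  unfold D. destruct Hs0 as [E|E]; rewrite E; field; lra.
Qed.

Lemma D_step k : (forall u, derivable_pt_lim (D k) u (D (S k) u)) ->
  (forall u, derivable_pt_lim (D (S k)) u (D (S (S k)) u)) ->
  forall u, derivable_pt_lim (D (S (S k))) u (D (S (S (S k))) u).
Proof.
  intros H0 H1 u.
  change (D (S (S k))) with (fun u => (- (2 * INR k + 1) * u * D (S k) u + (INR r ^ 2 - INR k ^ 2) * D k u) / (1 + u ^ 2)).
  change (D (S (S (S k))) u) with ((- (2 * INR (S k) + 1) * u * D (S (S k)) u + (INR r ^ 2 - INR (S k) ^ 2) * D (S k) u) / (1 + u ^ 2)).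
  change (D (S (S k)) u) with ((- (2 * INR k + 1) * u * D (S k) u + (INR r ^ 2 - INR k ^ 2) * D k u) / (1 + u ^ 2)).
  eapply dpl_eq; [| apply dpl_div; [apply dpl_plus; [apply dpl_mult; [apply dpl_mult; [apply dpl_const|apply dpl_id]|apply H1] | apply dpl_mult; [apply dpl_const|apply H0]] | apply dpl_plus; [apply dpl_const|apply (dpl_pow (fun y => y)); apply dpl_id] | nra]].
  cbv beta.
  assert (Ha : D (S (S k)) u = ((- (2 * INR k + 1) * u * D (S k) u + (INR r ^ 2 - INR k ^ 2) * D k u) / (1 + u ^ 2))) by reflexivity.
  rewrite Ha. rewrite (S_INR k). change (INR 2) with 2. simpl pred. field. nra.
Qed.

Lemma D_deriv k u : derivable_pt_lim (D k) u (D (S k) u).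
Proof.
  assert (forall k, (forall u, derivable_pt_lim (D k) u (D (S k) u)) /\ (forall u, derivable_pt_lim (D (S k)) u (D (S (S k)) u))).
  { induction k0. split; [apply D0_deriv | apply D1_deriv].
    destruct IHk0. split; auto. apply D_step; auto. }
  apply H.
Qed.

Lemma D_nth n k : nth_deriv n (D k) (D (k + n)).
Proof.
  revert k; induction n; intros k. rewrite Nat.add_0_r. constructor.
  apply nth_deriv_S with (D (S k)). apply D_deriv.
  replace (k + S n)%nat with (S k + n)%nat by lia. apply IHn.
Qed.

Lemma D_uniq n f g : nth_deriv n f g -> forall k, f = D k -> g = D (k + n).
Proof.
  induction 1; intros k E. rewrite Nat.add_0_r; auto.
  replace (k + S n)%nat with (S k + n)%nat by lia. apply IHnth_deriv.
  apply functional_extensionality; intros u. subst f.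
  eapply uniqueness_limite; [apply H | apply D_deriv].
Qed.

Lemma H_const u : D (S r) u * w u ^ (2 * r + 1) = D (S r) 0 * w 0 ^ (2 * r + 1).
Proof.
  set (Hf := fun u => D (S r) u * w u ^ (2 * r + 1)).
  assert (Hd : forall c, derivable_pt_lim Hf c 0).
  { intros c. unfold Hf. eapply dpl_eq; [| apply dpl_mult; [apply D_deriv | apply dpl_pow, w_deriv]].
    change (D (S (S r)) c) with ((- (2 * INR r + 1) * c * D (S r) c + (INR r ^ 2 - INR r ^ 2) * D r c) / (1 + c ^ 2)).
    assert (Hw := w_pos c). rewrite <- w_sq.
    replace (2 * r + 1)%nat with (S (2 * r)) by lia. rewrite S_INR, mult_INR.
    set (N := (2 * r)%nat). change (pred (S N)) with N.
    rewrite <- tech_pow_Rmult. change (INR 2) with 2. rewrite <- (tech_pow_Rmult (w c) N). field. lra. }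
  pose (pr := fun c => exist (fun l => derivable_pt_lim Hf c l) 0 (Hd c) : derivable_pt Hf c).
  change (Hf u = Hf 0).
  destruct (Rtotal_order u 0) as [Hl|[He|Hg]].
  - destruct (MVT_cor1 Hf u 0 pr Hl) as [c [Hc _]]. simpl in Hc. lra.
  - subst; auto.
  - destruct (MVT_cor1 Hf 0 u pr Hg) as [c [Hc _]]. simpl in Hc. lra.
Qed.

Lemma w0 : w 0 = 1.
Proof. unfold w. replace (1 + 0 ^ 2) with 1 by ring. apply sqrt_1. Qed.

Lemma dfact_rec n : (1 <= n)%nat -> dfact n = (n * dfact (n - 2))%nat.
Proof. intros H. destruct n as [|[|m]]; [lia| reflexivity |]. replace (S (S m) - 2)%nat with m by lia. reflexivity. Qed.

Lemma s_pow2 k : s ^ (S (S k)) = s ^ k.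
Proof. simpl. rewrite <- Rmult_assoc, Hs. ring. Qed.

Lemma D_at0 m : forall k, (k = 2 * m + (1 - (r mod 2)))%nat -> (k <= S r)%nat ->
  D k 0 * INR (dfact (r - k)) = s ^ k * INR r * INR (dfact (r + k - 2)).
Proof.
  induction m; intros k Ek Hk.
  - destruct (Nat.mod_bound_pos r 2) as [_ Hb]; [lia|lia|].
    assert (Hrm := Nat.div_mod_eq r 2).
    destruct (r mod 2) as [|[|]] eqn:Em; [| |lia].
    + simpl in Ek. subst k. simpl D. unfold F. rewrite w0.
      replace (r - 1)%nat with (r + 1 - 2)%nat by lia. simpl pow. ring_simplify (1 + s * 0) . rewrite pow1. field.
    + simpl in Ek. subst k. simpl D. unfold F. rewrite w0. ring_simplify (1 + s * 0). rewrite pow1.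
      rewrite Nat.sub_0_r, (dfact_rec r) by lia. rewrite mult_INR. rewrite Nat.add_0_r. simpl. ring.
  - set (k' := (k - 2)%nat). assert (Ek' : k = S (S k')) by lia.
    specialize (IHm k' ltac:(lia) ltac:(lia)).
    rewrite Ek'. 
    change (D (S (S k')) 0) with ((- (2 * INR k' + 1) * 0 * D (S k') 0 + (INR r ^ 2 - INR k' ^ 2) * D k' 0) / (1 + 0 ^ 2)).
    rewrite s_pow2.
    replace (r + S (S k') - 2)%nat with (r + k')%nat by lia.
    rewrite (dfact_rec (r + k')) in * by lia.
    rewrite (dfact_rec (r - k')) in IHm by lia.
    replace (r - k' - 2)%nat with (r - S (S k'))%nat in IHm by lia.
    rewrite !mult_INR, minus_INR in IHm by lia.
    rewrite !mult_INR, plus_INR.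
    assert (Hlt : INR k' < INR r) by (apply lt_INR; lia).
    apply Rmult_eq_reg_l with (INR r - INR k'); [|lra].
    replace (r + k' - 2)%nat with (r + k' - 2)%nat by reflexivity.
    transitivity ((INR r + INR k') * (INR r - INR k') * (D k' 0 * ((INR r - INR k') * INR (dfact (r - S (S k')))))).
    field. rewrite IHm. ring.
Qed.
End S.

Lemma dfact_pos n : (0 < dfact n)%nat.
Proof.
  assert (forall n, (0 < dfact n)%nat /\ (0 < dfact (S n))%nat).
  { induction n0. simpl; lia. destruct IHn0; split; auto. change (dfact (S (S n0))) with (S (S n0) * dfact n0)%nat. lia. }
  apply H.
Qed.


Lemma cosh_sq x : cosh x ^ 2 = 1 + sinh x ^ 2.
Proof. unfold cosh, sinh. rewrite exp_Ropp. assert (H := exp_pos x). field. lra. Qed.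

Lemma cosh_pos' x : 0 < cosh x.
Proof. unfold cosh. assert (H := exp_pos x). assert (H' := exp_pos (- x)). lra. Qed.

Lemma w_sinh x : w (sinh x) = cosh x.
Proof. unfold w. rewrite <- cosh_sq. apply sqrt_pow2. left; apply cosh_pos'. Qed.

Theorem mainTheorem9 (r : nat) (s : R) :
  (1 <= r)%nat -> (s = 1 \/ s = -1) ->
  (exists g, nth_deriv (S r) (fun u => (sqrt (1 + u ^ 2) + s * u) ^ r) g) /\
  (forall g, nth_deriv (S r) (fun u => (sqrt (1 + u ^ 2) + s * u) ^ r) g ->
     forall x : R,
       sech x ^ (2 * r + 1) =
       s ^ (S r) / (INR r * INR (dfact (2 * r - 1))) * g (sinh x)).
Proof.
  intros Hr Hs0.
  change (fun u => (sqrt (1 + u ^ 2) + s * u) ^ r) with (D r s 0).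
  split.
  - exists (D r s (0 + S r)). apply D_nth; auto.
  - intros g Hg x. rewrite (D_uniq r s Hs0 Hr _ _ _ Hg 0 eq_refl). simpl plus.
    assert (HC := H_const r s Hs0 Hr (sinh x)). rewrite w0, pow1, Rmult_1_r, w_sinh in HC.
    assert (Hm : exists m, S r = (2 * m + (1 - r mod 2))%nat).
    { assert (Hq := Nat.div_mod_eq r 2). assert (Hb := Nat.mod_upper_bound r 2 ltac:(lia)).
      destruct (r mod 2) as [|[|]]; [exists (r / 2)%nat | exists (r / 2 + 1)%nat | ]; lia. }
    destruct Hm as [m Hm].
    assert (HA := D_at0 r s Hs0 Hr m (S r) Hm (le_n _)).
    replace (r - S r)%nat with 0%nat in HA by lia.
    replace (r + S r - 2)%nat with (2 * r - 1)%nat in HA by lia.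
    simpl dfact in HA at 1. rewrite Rmult_1_r in HA.
    assert (Hc := cosh_pos' x).
    assert (Hd : 0 < INR (dfact (2 * r - 1))) by (apply lt_0_INR, dfact_pos).
    assert (Hrp : 0 < INR r) by (apply lt_0_INR; lia).
    assert (Hss : s ^ S r * s ^ S r = 1) by (rewrite <- Rpow_mult_distr, (Hs s Hs0), pow1; reflexivity).
    assert (Hcp : 0 < cosh x ^ (2 * r + 1)) by (apply pow_lt; auto).
    assert (E : D r s (S r) (sinh x) = D r s (S r) 0 / cosh x ^ (2 * r + 1)).
    { apply Rmult_eq_reg_r with (cosh x ^ (2 * r + 1)); [|lra]. rewrite HC. field. lra. }
    rewrite E, HA. unfold sech. rewrite pow_inv.
    set (C := cosh x ^ (2 * r + 1)) in *. set (S0 := s ^ S r) in *.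
    replace (r + (r + 0) + 1)%nat with (2 * r + 1)%nat by lia. fold C. transitivity (S0 * S0 / C). rewrite Hss. field. lra. field. lra.
Qed.
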